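(* Let $g:[0,1]\to\mathbb{R}$ be strictly monotone in a neighborhood of $x_0\in[0,1]$, let $d\in(0,1)$, $a\ne0$, and $x_m=x_0+ad^m$, with $x_m\in[0,1]$ for all large $m$. Suppose that $\frac{g(x_m)-g(x_0)}{x_m-x_0}\to L$ as $m\to\infty$, where $L\in\{0,+\infty,-\infty\}$. If $a<0$, then the left derivative of $g$ at $x_0$ exists and equals $L$; if $a>0$, then the right derivative of $g$ at $x_0$ exists and equals $L$. (One-sided monotonicity on the relevant side of $x_0$ suffices for the corresponding one-sided conclusion.) *)

(* Defs.v *)
From Stdlib Require Import Reals.
From Coquelicot Require Import Coquelicot.
Open Scope R_scope.

Definition strictly_monotone_on (g : R -> R) (P : R -> Prop) : Prop :=
  (forall x y, P x -> P y -> x < y -> g x < g y) \/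
  (forall x y, P x -> P y -> x < y -> g y < g x).

Definition has_left_derivative (g : R -> R) (x0 : R) (L : Rbar) : Prop :=
  filterlim (fun x => (g x - g x0) / (x - x0)) (at_left x0) (Rbar_locally L).

Definition has_right_derivative (g : R -> R) (x0 : R) (L : Rbar) : Prop :=
  filterlim (fun x => (g x - g x0) / (x - x0)) (at_right x0) (Rbar_locally L).

(* Main.v *)
Require Import Defs.
From Stdlib Require Import Reals Lra Lia.
From Coquelicot Require Import Coquelicot.
Open Scope R_scope.

Lemma pow_dec (d : R) (M m : nat) : 0 < d < 1 -> (M <= m)%nat -> d ^ m <= d ^ M.
Proof.
  intros Hd Hm. replace m with (M + (m - M))%nat by lia. rewrite pow_add.
  assert (H1 : forall k, 0 <= d ^ k <= 1).
  { induction k; simpl; [lra|]. split; [apply Rmult_le_pos; lra | nra]. }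
  pose proof (H1 M). pose proof (H1 (m - M)%nat). nra.
Qed.

Lemma small_pow (b d y : R) : 0 < b -> 0 < d < 1 -> 0 < y ->
  exists K, forall n, (K <= n)%nat -> b * d ^ n < y.
Proof.
  intros Hb Hd Hy.
  assert (Ha : Rabs d < 1) by (rewrite Rabs_pos_eq; lra).
  assert (Hyb : 0 < y / b) by (apply Rdiv_lt_0_compat; lra).
  destruct (pow_lt_1_zero d Ha (y / b) Hyb) as [K HK].
  exists K. intros n Hn. specialize (HK n Hn).
  rewrite Rabs_pos_eq in HK by (apply pow_le; lra).
  assert (E : b * (y / b) = y) by (field; lra).
  nra.
Qed.

Lemma find_m (b d h : R) (M : nat) : 0 < b -> 0 < d < 1 -> 0 < h <= b * d ^ M ->
  exists m, (M <= m)%nat /\ b * d ^ (S m) < h <= b * d ^ m.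
Proof.
  intros Hb Hd Hh.
  destruct (small_pow b d h Hb Hd ltac:(lra)) as [K HK].
  assert (aux : forall k M', b * d ^ M' >= h -> b * d ^ (M' + k) < h ->
     exists m, (M' <= m)%nat /\ b * d ^ (S m) < h <= b * d ^ m).
  { induction k; intros M' H1 H2.
    - rewrite Nat.add_0_r in H2. lra.
    - destruct (Rlt_dec (b * d ^ (S M')) h) as [Hl|Hl].
      + exists M'. split; [lia | lra].
      + destruct (IHk (S M')) as [m [Hm1 Hm2]].
        * lra.
        * replace (S M' + k)%nat with (M' + S k)%nat by lia. exact H2.
        * exists m. split; [lia | exact Hm2]. }
  apply (aux K M); [lra|]. apply HK. lia.
Qed.

Lemma div_mono (p q h k : R) : 0 <= p <= q -> 0 < h <= k -> p / k <= q / h.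
Proof.
  intros Hp Hh. unfold Rdiv. apply Rle_trans with (p * / h).
  - apply Rmult_le_compat_l; [lra | apply Rinv_le_contravar; lra].
  - apply Rmult_le_compat_r; [left; apply Rinv_0_lt_compat; lra | lra].
Qed.

Lemma div_mono_neg (p q h k : R) : q <= p <= 0 -> 0 < h <= k -> q / h <= p / k.
Proof.
  intros Hp Hh. pose proof (div_mono (-p) (-q) h k ltac:(lra) Hh).
  unfold Rdiv in *. rewrite !Ropp_mult_distr_l_reverse in H. lra.
Qed.

Lemma bound (G : R -> R) (b d : R) (M m : nat) (h : R) :
  0 < b -> 0 < d < 1 -> G 0 = 0 ->
  ((forall h1 h2, 0 <= h1 <= h2 -> h2 <= b * d ^ M -> G h1 <= G h2) \/
   (forall h1 h2, 0 <= h1 <= h2 -> h2 <= b * d ^ M -> G h2 <= G h1)) ->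
  (M <= m)%nat -> b * d ^ (S m) < h <= b * d ^ m ->
  (d * (G (b * d ^ (S m)) / (b * d ^ (S m))) <= G h / h <= G (b * d ^ m) / (b * d ^ m) / d) \/
  (G (b * d ^ m) / (b * d ^ m) / d <= G h / h <= d * (G (b * d ^ (S m)) / (b * d ^ (S m)))).
Proof.
  intros Hb Hd G0 Hmono Hm Hh.
  pose proof (pow_dec d M m Hd Hm) as Hpd.
  assert (HM : b * d ^ m <= b * d ^ M) by nra.
  set (hm := b * d ^ m) in *.
  assert (Hhm : hm > 0) by (unfold hm; apply Rmult_lt_0_compat; [lra | apply pow_lt; lra]).
  assert (E1 : b * d ^ (S m) = d * hm) by (unfold hm; simpl; ring).
  rewrite E1 in *.
  assert (Ea : d * (G (d * hm) / (d * hm)) = G (d * hm) / hm) by (field; lra).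
  assert (Eb : G hm / hm / d = G hm / (d * hm)) by (field; lra).
  rewrite Ea, Eb.
  assert (dpos : 0 < d * hm) by nra.
  destruct Hmono as [Hi | Hi]; [left | right].
  - pose proof (Hi 0 (d * hm) ltac:(lra) ltac:(nra)).
    pose proof (Hi (d * hm) h ltac:(lra) ltac:(lra)).
    pose proof (Hi h hm ltac:(lra) ltac:(lra)).
    split; apply div_mono; lra.
  - pose proof (Hi 0 (d * hm) ltac:(lra) ltac:(nra)).
    pose proof (Hi (d * hm) h ltac:(lra) ltac:(lra)).
    pose proof (Hi h hm ltac:(lra) ltac:(lra)).
    split; apply div_mono_neg; lra.
Qed.

Lemma core (G : R -> R) (b d : R) (L : Rbar) (M : nat) :
  0 < b -> 0 < d < 1 -> G 0 = 0 ->
  ((forall h1 h2, 0 <= h1 <= h2 -> h2 <= b * d ^ M -> G h1 <= G h2) \/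
   (forall h1 h2, 0 <= h1 <= h2 -> h2 <= b * d ^ M -> G h2 <= G h1)) ->
  (L = Finite 0 \/ L = p_infty \/ L = m_infty) ->
  is_lim_seq (fun m => G (b * d ^ m) / (b * d ^ m)) L ->
  forall P : R -> Prop, Rbar_locally L P ->
  exists delta, 0 < delta /\ forall h, 0 < h < delta -> P (G h / h).
Proof.
  intros Hb Hd G0 Hmono HL Hlim P HP.
  apply is_lim_seq_spec in Hlim.
  set (Q := fun n => G (b * d ^ n) / (b * d ^ n)) in *.
  set (id := / d).
  assert (Hid : d * id = 1) by (unfold id; field; lra).
  assert (Hid1 : 1 <= id).
  { unfold id. rewrite <- Rinv_1. apply Rinv_le_contravar; lra. }
  assert (gen : forall (R0 : R -> Prop) (K : nat),
     (forall n, (K <= n)%nat -> R0 (Q n)) ->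
     exists delta, 0 < delta /\ forall h, 0 < h < delta ->
       exists m, R0 (Q m) /\ R0 (Q (S m)) /\
         ((d * Q (S m) <= G h / h <= Q m * id) \/ (Q m * id <= G h / h <= d * Q (S m)))).
  { intros R0 K HK. exists (b * d ^ (Nat.max M K)). split.
    - apply Rmult_lt_0_compat; [lra | apply pow_lt; lra].
    - intros h Hh.
      destruct (find_m b d h (Nat.max M K) Hb Hd ltac:(lra)) as [m [Hm1 Hm2]].
      exists m. split; [apply HK; lia|]. split; [apply HK; lia|].
      apply (bound G b d M m h Hb Hd G0 Hmono ltac:(lia) Hm2). }
  destruct HL as [-> | [-> | ->]]; simpl in Hlim, HP.
  - destruct HP as [eps Heps].
    assert (ed : 0 < eps * d) by (pose proof (cond_pos eps); nra).
    destruct (Hlim (mkposreal _ ed)) as [K HK]. simpl in HK.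
    destruct (gen (fun q => Rabs (q - 0) < eps * d) K HK) as [delta [Hdel Hh]].
    exists delta. split; [exact Hdel|]. intros h Hh1.
    destruct (Hh h Hh1) as [m [H1 [H2 H3]]].
    apply Heps. unfold ball; simpl; unfold AbsRing_ball, abs, minus, plus, opp; simpl.
    rewrite Rminus_0_r in H1, H2.
    apply Rabs_def2 in H1. apply Rabs_def2 in H2.
    pose proof (cond_pos eps).
    apply Rabs_def1; nra.
  - destruct HP as [M0 HM0].
    destruct (Hlim (Rabs M0 * id * id)) as [K HK].
    destruct (gen (fun q => Rabs M0 * id * id < q) K HK) as [delta [Hdel Hh]].
    exists delta. split; [exact Hdel|]. intros h Hh1.
    destruct (Hh h Hh1) as [m [H1 [H2 H3]]].
    apply HM0. pose proof (Rle_abs M0). pose proof (Rabs_pos M0).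
    assert (Rabs M0 <= Rabs M0 * id) by nra.
    assert (Rabs M0 * id <= Rabs M0 * id * id) by nra.
    nra.
  - destruct HP as [M0 HM0].
    destruct (Hlim (- (Rabs M0 * id * id))) as [K HK].
    destruct (gen (fun q => q < - (Rabs M0 * id * id)) K HK) as [delta [Hdel Hh]].
    exists delta. split; [exact Hdel|]. intros h Hh1.
    destruct (Hh h Hh1) as [m [H1 [H2 H3]]].
    apply HM0. pose proof (Rle_abs (- M0)). rewrite Rabs_Ropp in H. pose proof (Rabs_pos M0).
    assert (Rabs M0 <= Rabs M0 * id) by nra.
    assert (Rabs M0 * id <= Rabs M0 * id * id) by nra.
    nra.
Qed.

Theorem lemma3 (g : R -> R) (x0 d a : R) (L : Rbar) :
  0 <= x0 <= 1 ->
  0 < d < 1 ->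
  a <> 0 ->
  (exists N : nat, forall m : nat, (N <= m)%nat -> 0 <= x0 + a * d ^ m <= 1) ->
  (L = Finite 0 \/ L = p_infty \/ L = m_infty) ->
  is_lim_seq (fun m : nat => (g (x0 + a * d ^ m) - g x0) / ((x0 + a * d ^ m) - x0)) L ->
  (a < 0 ->
     (exists delta, 0 < delta /\
        strictly_monotone_on g (fun x => 0 <= x <= 1 /\ x0 - delta < x <= x0)) ->
     has_left_derivative g x0 L) /\
  (0 < a ->
     (exists delta, 0 < delta /\
        strictly_monotone_on g (fun x => 0 <= x <= 1 /\ x0 <= x < x0 + delta)) ->
     has_right_derivative g x0 L).
Proof.
  intros Hx0 Hd Ha [N HN] HL Hlim. split.
  - intros Hneg [delta [Hdel Hmon]].
    set (b := - a). assert (Hb : 0 < b) by (unfold b; lra).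
    destruct (small_pow b d delta Hb Hd Hdel) as [K HK].
    set (M := Nat.max N K).
    assert (HxM : 0 <= x0 - b * d ^ M <= 1) by
      (pose proof (HN M ltac:(unfold M; lia)); unfold b in *; lra).
    assert (HbM : b * d ^ M < delta) by (apply HK; unfold M; lia).
    set (G := fun h => g x0 - g (x0 - h)).
    assert (Hmono : (forall h1 h2, 0 <= h1 <= h2 -> h2 <= b * d ^ M -> G h1 <= G h2) \/
         (forall h1 h2, 0 <= h1 <= h2 -> h2 <= b * d ^ M -> G h2 <= G h1)).
    { destruct Hmon as [Hi | Hi]; [left | right]; intros h1 h2 H1 H2; unfold G;
      (destruct (Req_dec h1 h2) as [-> | Hne]; [lra|]);
      pose proof (Hi (x0 - h2) (x0 - h1) ltac:(lra) ltac:(lra) ltac:(lra)); lra. }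
    assert (Hl2 : is_lim_seq (fun m => G (b * d ^ m) / (b * d ^ m)) L).
    { eapply is_lim_seq_ext; [|exact Hlim]. intros n. simpl. unfold G, b.
      assert (0 < d ^ n) by (apply pow_lt; lra).
      replace (x0 - - a * d ^ n) with (x0 + a * d ^ n) by ring.
      field. split; [lra | nra]. }
    pose proof (core G b d L M Hb Hd ltac:(unfold G; change (g x0 - g (x0 - 0) = 0); rewrite Rminus_0_r; lra) Hmono HL Hl2) as Hc.
    unfold has_left_derivative, filterlim, filter_le, filtermap. intros P HP.
    destruct (Hc P HP) as [dl [Hdl Hh]].
    unfold at_left, within, locally. exists (mkposreal dl Hdl). intros y Hy Hyx. change R in y.
    unfold ball in Hy; simpl in Hy; unfold AbsRing_ball, abs, minus, plus, opp in Hy; simpl in Hy.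
    apply Rabs_def2 in Hy.
    specialize (Hh (x0 - y) ltac:(lra)). unfold G in Hh.
    replace (x0 - (x0 - y)) with y in Hh by ring.
    replace ((g y - g x0) / (y - x0)) with ((g x0 - g y) / (x0 - y)) by (field; lra).
    exact Hh.
  - intros Hpos [delta [Hdel Hmon]].
    set (b := a). assert (Hb : 0 < b) by (unfold b; lra).
    destruct (small_pow b d delta Hb Hd Hdel) as [K HK].
    set (M := Nat.max N K).
    assert (HxM : 0 <= x0 + b * d ^ M <= 1) by
      (pose proof (HN M ltac:(unfold M; lia)); unfold b in *; lra).
    assert (HbM : b * d ^ M < delta) by (apply HK; unfold M; lia).
    set (G := fun h => g (x0 + h) - g x0).
    assert (Hmono : (forall h1 h2, 0 <= h1 <= h2 -> h2 <= b * d ^ M -> G h1 <= G h2) \/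
         (forall h1 h2, 0 <= h1 <= h2 -> h2 <= b * d ^ M -> G h2 <= G h1)).
    { destruct Hmon as [Hi | Hi]; [left | right]; intros h1 h2 H1 H2; unfold G;
      (destruct (Req_dec h1 h2) as [-> | Hne]; [lra|]);
      pose proof (Hi (x0 + h1) (x0 + h2) ltac:(lra) ltac:(lra) ltac:(lra)); lra. }
    assert (Hl2 : is_lim_seq (fun m => G (b * d ^ m) / (b * d ^ m)) L).
    { eapply is_lim_seq_ext; [|exact Hlim]. intros n. simpl. unfold G, b.
      replace (x0 + a * d ^ n - x0) with (a * d ^ n) by ring. reflexivity. }
    pose proof (core G b d L M Hb Hd ltac:(unfold G; change (g (x0 + 0) - g x0 = 0); rewrite Rplus_0_r; lra) Hmono HL Hl2) as Hc.
    unfold has_right_derivative, filterlim, filter_le, filtermap. intros P HP.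
    destruct (Hc P HP) as [dl [Hdl Hh]].
    unfold at_right, within, locally. exists (mkposreal dl Hdl). intros y Hy Hyx. change R in y.
    unfold ball in Hy; simpl in Hy; unfold AbsRing_ball, abs, minus, plus, opp in Hy; simpl in Hy.
    apply Rabs_def2 in Hy.
    specialize (Hh (y - x0) ltac:(lra)). unfold G in Hh.
    replace (x0 + (y - x0)) with y in Hh by ring.
    exact Hh.
Qed.
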